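(* Let $H$ be a real Hilbert space and let $\mathcal{S}\subset H$ be a dense subspace. Equip $H\otimes \mathcal{C}l_n$ with the $\mathcal{C}l_n$-valued inner product $\langle\cdot,\cdot\rangle$ induced by the inner product of $H$. Let $D:\mathcal{S}\otimes\mathcal{C}l_n\to\mathcal{S}\otimes\mathcal{C}l_n$ be a linear map which has a dual operator $D^*$ on $\mathcal{S}\otimes\mathcal{C}l_n$, i.e. $\langle Df,g\rangle=\langle f,D^*g\rangle$ for all $f,g\in\mathcal{S}\otimes\mathcal{C}l_n$, and suppose $D^*D=DD^*$. Let $G$ be an operator on $\mathcal{S}\otimes\mathcal{C}l_n$ that is an inverse of $D$, i.e. $DG=GD=I$. Define $\Pi=D^*G$. Then $\Pi$ is an isometric operator in $H\otimes\mathcal{C}l_n$: $\langle \Pi f,\Pi g\rangle=\langle f,g\rangle$ for all $f,g\in \mathcal{S}\otimes\mathcal{C}l_n$.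
   Context: $\mathcal{C}l_n$ is the real Clifford algebra generated by an orthonormal basis $e_1,\dots,e_n$ of $\mathbb{R}^n$ with relations $e_ie_j+e_je_i=-2\delta_{ij}e_0$, $e_0$ the identity. For $a=\sum_A a_Ae_A\in\mathcal{C}l_n$, the conjugation $\bar a$ is the anti-involution with $\overline{e_{j_1}\cdots e_{j_r}}=(-1)^r e_{j_r}\cdots e_{j_1}$ composed with reversion, i.e. $\bar a=\tilde a^{\dagger}$ where $\tilde{}$ is reversion and $a^\dagger$ is Clifford conjugation. The $\mathcal{C}l_n$-valued inner product on $H\otimes\mathcal{C}l_n$ is $\langle \sum_A u_Ae_A,\sum_B v_Be_B\rangle=\sum_{A,B}\langle u_A,v_B\rangle_H\,\overline{e_A}e_B$ (for $H=L^2$ of a measure space this is $\int\overline{u}v$). *)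

(* Defs.v *)
From HB Require Import structures.
From mathcomp Require Import all_boot all_order all_algebra.
From mathcomp Require Import all_classical all_reals all_analysis.
Set Implicit Arguments. Unset Strict Implicit. Unset Printing Implicit Defensive.
Import Order.TTheory GRing.Theory Num.Theory.
Import numFieldNormedType.Exports.
Local Open Scope classical_set_scope.
Local Open Scope ring_scope.

(* ---------- The real Clifford algebra Cl_n ----------
   An element is a real function on the index sets A ⊆ {0,..,n-1}
   (coefficient of the basis blade e_A = e_{a1}...e_{ak}, a1<...<ak). *)
Definition cl (R : realType) (n : nat) := {ffun {set 'I_n} -> R}.

Definition cl_e (R : realType) (n : nat) (A : {set 'I_n}) : cl R n :=
  [ffun C => (C == A)%:R].

(* e_A e_B = (-1)^(#{(a,b) in A x B | b < a} + |A ∩ B|) e_{A Δ B},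
   using e_i e_j = - e_j e_i (i <> j) and e_i^2 = -1. *)
Definition blade_sign (R : realType) (n : nat) (A B : {set 'I_n}) : R :=
  (-1) ^+ (#|[set p : 'I_n * 'I_n | (p.1 \in A) && (p.2 \in B) && (p.2 < p.1)%N]|
           + #|A :&: B|).

Definition cl_mul (R : realType) (n : nat) (x y : cl R n) : cl R n :=
  \sum_(A : {set 'I_n}) \sum_(B : {set 'I_n})
     (x A * y B * blade_sign R A B) *: cl_e R ((A :\: B) :|: (B :\: A)).

(* conjugation: bar(e_{j1}...e_{jr}) = (-1)^r e_{jr}...e_{j1}
   = (-1)^r (-1)^(r(r-1)/2) e_A, extended linearly *)
Definition cl_conj (R : realType) (n : nat) (x : cl R n) : cl R n :=
  [ffun A : {set 'I_n} => (-1) ^+ (#|A| + 'C(#|A|, 2)) * x A].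

Definition is_inner_product (R : realType) (H : normedModType R)
    (ip : H -> H -> R) : Prop :=
  [/\ (forall x y, ip x y = ip y x),
      (forall (a : R) (x y z : H), ip (a *: x + y) z = a * ip x z + ip y z)
    & (forall x, `|x| ^+ 2 = ip x x)].

Definition is_subspace (R : realType) (H : normedModType R) (S : set H) : Prop :=
  S 0 /\ forall (a : R) x y, S x -> S y -> S (a *: x + y).

(* ---------- H ⊗ Cl_n ----------
   An element of H ⊗ Cl_n is f = sum_A f_A e_A, represented by A |-> f_A. *)
Definition HCl (H : Type) (n : nat) := {set 'I_n} -> H.

Definition inSCl (H : Type) (n : nat) (S : set H) (f : HCl H n) : Prop :=
  forall A, S (f A).

Definition cl_inner (R : realType) (H : normedModType R) (ip : H -> H -> R)
    (n : nat) (f g : HCl H n) : cl R n :=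
  \sum_(A : {set 'I_n}) \sum_(B : {set 'I_n})
     ip (f A) (g B) *: cl_mul (cl_conj (cl_e R A)) (cl_e R B).

(* Main.v *)
Require Import Defs.
From HB Require Import structures.
From mathcomp Require Import all_boot all_order all_algebra.
From mathcomp Require Import all_classical all_reals all_analysis.
Import Order.TTheory GRing.Theory Num.Theory.
Import numFieldNormedType.Exports.
Set Implicit Arguments. Unset Strict Implicit.
From mathcomp Require Import zify.
Lemma bin2D x y : 'C(x + y, 2) = ('C(x, 2) + 'C(y, 2) + x * y)%N.
Proof.
elim: y => [|y IH]; first by rewrite addn0 bin0n muln0 !addn0.
rewrite addnS !binS IH !bin1; lia.
Qed.

Lemma cntE (n : nat) (P : 'I_n -> 'I_n -> bool) :
  #|[set p : 'I_n * 'I_n | P p.1 p.2]| = (\sum_i \sum_j (P i j : nat))%N.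
Proof.
rewrite -sum1_card big_mkcond /= pair_bigA /=.
by apply: eq_bigr => -[i j] _; rewrite inE /=; case: (P i j).
Qed.

Lemma inv_sum (n : nat) (A B : {set 'I_n}) :
  (#|[set p : 'I_n * 'I_n | (p.1 \in A) && (p.2 \in B) && (p.2 < p.1)%N]|
  + #|[set p : 'I_n * 'I_n | (p.1 \in B) && (p.2 \in A) && (p.2 < p.1)%N]|
  + #|A :&: B| = #|A| * #|B|)%N.
Proof.
rewrite (cntE (fun i j => (i \in A) && (j \in B) && (j < i)%N)).
rewrite (cntE (fun i j => (i \in B) && (j \in A) && (j < i)%N)).
rewrite -cardsX (cntE (fun i j => (i \in A) && (j \in B))).
have -> : \sum_i \sum_j ((i \in B) && (j \in A) && (j < i)%N : nat) =
          \sum_i \sum_j ((j \in B) && (i \in A) && (i < j)%N : nat).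
  by rewrite exchange_big.
rewrite -big_split /= -sum1_card [X in _ + X = _]big_mkcond /= -big_split /=.
apply: eq_bigr => i _; rewrite -big_split /=.
rewrite (bigD1 i) //= [in RHS](bigD1 i) //= inE.
rewrite ltnn !andbF /= add0n addnC; congr (_ + _)%N.
rewrite add0n; apply: eq_bigr => j nji.
case: (i \in A); case: (j \in B) => //=.
rewrite neq_ltn in nji; case/orP: nji => h.
  by rewrite h ltnNge (ltnW h).
by rewrite ltnNge (ltnW h) h.
Qed.

Lemma par (a b c p q : nat) : p + q + c = (a + c) * (b + c) ->
  odd ((a + b + 'C(a + b, 2)) + ((a + c + 'C(a + c, 2)) + (p + c))) =
  odd ((b + c + 'C(b + c, 2)) + (q + c)).
Proof.
move=> /(congr1 odd); rewrite !bin2D !oddD !oddM !oddD.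
case: (odd p); case: (odd q); case: (odd c); case: (odd a); case: (odd b);
case: (odd 'C(a, 2)); case: (odd 'C(b, 2)); case: (odd 'C(c, 2)) => //.
Qed.

Local Open Scope ring_scope.
Lemma scE (R : realType) (n : nat) (c : R) (x : cl R n) C : (c *: x) C = c * x C.
Proof. by rewrite ffunE. Qed.
Lemma dE (R : realType) (n : nat) (x y : cl R n) C : (x + y) C = x C + y C.
Proof. by rewrite ffunE. Qed.
Definition sA (R : realType) (n : nat) (A : {set 'I_n}) : R := (-1) ^+ (#|A| + 'C(#|A|, 2)).
Lemma conj_e (R : realType) (n : nat) (A : {set 'I_n}) : cl_conj (cl_e R A) = sA R A *: cl_e R A.
Proof. apply/ffunP => C; rewrite scE !ffunE; case: (C =P A) => [->|_] /=; rewrite ?mulr0 ?mulr1 //. Qed.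
Definition M (R : realType) (n : nat) (A B : {set 'I_n}) := cl_mul (cl_conj (cl_e R A)) (cl_e R B).
Lemma M_eq (R : realType) (n : nat) (A B : {set 'I_n}) :
  M R A B = (sA R A * blade_sign R A B) *: cl_e R ((A :\: B) :|: (B :\: A)).
Proof.
rewrite /M conj_e /cl_mul (bigD1 A) //=. rewrite [X in _ + X = _]big1 ?addr0 => [|A' nA']; last first.
  by rewrite big1 // => B' _; rewrite scE ffunE (negPf nA') !mulr0 !mul0r scale0r.
rewrite (bigD1 B) //= [X in _ + X = _]big1 ?addr0 => [|B' nB']; last first.
  by rewrite !ffunE (negPf nB') !mulr0 mul0r scale0r.
by congr (_ *: _); rewrite scE /cl_e !ffunE !eqxx !mulr1.
Qed.
Lemma card_classic (n : nat) (P : 'I_n * 'I_n -> bool) :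
  #|([set p | P p])%classic| = #|[set p | P p]|.
Proof. apply: eq_card => p; by rewrite inE /in_mem /= /in_set asboolb. Qed.

Lemma sign_id (R : realType) (n : nat) (A B : {set 'I_n}) :
  sA R ((A :\: B) :|: (B :\: A)) * (sA R A * blade_sign R A B) =
  sA R B * blade_sign R B A.
Proof.
have hA : #|A| = (#|A :\: B| + #|A :&: B|)%N by rewrite -(cardsID B A) addnC.
have hB : #|B| = (#|B :\: A| + #|A :&: B|)%N by rewrite -(cardsID A B) finset.setIC addnC.
have hD : #|(A :\: B) :|: (B :\: A)| = (#|A :\: B| + #|B :\: A|)%N.
  rewrite cardsU; suff -> : (A :\: B) :&: (B :\: A) = finset.set0 by rewrite cards0 subn0.
  by apply/setP => x; rewrite !inE; case: (x \in A); case: (x \in B).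
have := inv_sum A B; rewrite hA hB.
rewrite /sA /blade_sign -!exprD (finset.setIC B A) hA hB hD.
rewrite !card_classic; move/par => h; rewrite -signr_odd h; exact: signr_odd.
Qed.
Lemma conj_M (R : realType) (n : nat) (A B : {set 'I_n}) : cl_conj (M R A B) = M R B A.
Proof.
rewrite !M_eq (finset.setUC (B :\: A)); apply/ffunP => C; rewrite ffunE !scE /cl_e !ffunE.
case: (C =P _) => [->|_]; rewrite ?mulr0 ?mulr1 //.
exact: sign_id.
Qed.

Lemma conjK (R : realType) (n : nat) (x : cl R n) : cl_conj (cl_conj x) = x.
Proof.
apply/ffunP => C; rewrite !ffunE mulrA -exprD addnn -signr_odd odd_double expr0 mul1r //.
Qed.

Lemma herm (R : realType) (H : normedModType R) (ip : H -> H -> R) (n : nat) f g :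
  (forall x y, ip x y = ip y x) ->
  cl_conj (cl_inner ip (n:=n) f g) = cl_inner ip g f.
Proof.
move=> ipC; apply/ffunP => C; rewrite /cl_inner ffunE !sum_ffunE.
under eq_bigr do rewrite sum_ffunE.
under [RHS]eq_bigr do rewrite sum_ffunE.
rewrite [RHS]exchange_big /= mulr_sumr; apply: eq_bigr => A _.
rewrite mulr_sumr; apply: eq_bigr => B _.
rewrite !scE -/(M R A B) -/(M R B A) -conj_M ipC.
rewrite [cl_conj _ _]ffunE mulrCA; congr (_ * _).
by rewrite mulrA -exprD addnn -signr_odd odd_double mul1r.
Qed.

Unset Implicit Arguments.
Set Strict Implicit.
Local Open Scope classical_set_scope.
Local Open Scope ring_scope.

Theorem mainTheorem1 (R : realType) (H : completeNormedModType R)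
    (ip : H -> H -> R) (n : nat) (S : set H)
    (D Dstar G : HCl H n -> HCl H n) :
  is_inner_product ip ->
  is_subspace S ->
  dense S ->
  (* D is a (real-)linear map S ⊗ Cl_n -> S ⊗ Cl_n *)
  (forall f, inSCl S f -> inSCl S (D f)) ->
  (forall (a : R) f g, inSCl S f -> inSCl S g ->
     D (fun A => a *: f A + g A) = (fun A => a *: D f A + D g A)) ->
  (* D* is a dual operator on S ⊗ Cl_n *)
  (forall f, inSCl S f -> inSCl S (Dstar f)) ->
  (forall f g, inSCl S f -> inSCl S g ->
     cl_inner ip (D f) g = cl_inner ip f (Dstar g)) ->
  (* D* D = D D* *)
  (forall f, inSCl S f -> Dstar (D f) = D (Dstar f)) ->
  (* G is an operator on S ⊗ Cl_n inverse to D *)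
  (forall f, inSCl S f -> inSCl S (G f)) ->
  (forall f, inSCl S f -> D (G f) = f) ->
  (forall f, inSCl S f -> G (D f) = f) ->
  (* Pi = D* G is isometric *)
  forall f g, inSCl S f -> inSCl S g ->
    cl_inner ip (Dstar (G f)) (Dstar (G g)) = cl_inner ip f g.
Proof.
move=> [ipC _ _] _ _ SD _ SDs dual comm SG DG GD f g Sf Sg.
have adjR : forall a b, inSCl S a -> inSCl S b ->
    cl_inner ip (Dstar a) b = cl_inner ip a (D b).
  move=> a b Sa Sb.
  by rewrite -[LHS]conjK herm // -dual // herm.
have SGf := SG _ Sf; have SGg := SG _ Sg.
rewrite -dual; last 2 first; [exact: SDs|exact: SGg|]. rewrite -comm // DG // adjR // DG //.
Qed.
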